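(* Let $k\geq 3$ be an integer and let $G$ be a graph on $n$ vertices with minimum degree $\delta(G)\geq\delta>\frac{(k-1)n}{k}$, with at least two $K_{k+1}$-components, and such that $G[\mathrm{int}_k(G)]$ contains no copy of $K_k$. Let $C_1,\dots,C_p$ be the $K_{k+1}$-components of $G$ and set $q':=k\delta-(k-1)n+\sum_{j\neq 1}|\mathrm{ext}(C_j)|-|\mathrm{ext}(C_1)|$. Then $CK_{k+1}F(G)\geq(k+1)\min\left\{k\delta-(k-1)n,\left\lfloor\frac{|\mathrm{ext}(C_1)|}{2}\right\rfloor,q'\right\}$.
   Context: A $K_{k+1}$-walk in $G$ is a sequence of copies of $K_k$ in which consecutive copies lie in a common copy of $K_{k+1}$; its endpoints are then $K_{k+1}$-connected; the equivalence classes of copies of $K_k$ are the $K_{k+1}$-components. The vertices of a component are the vertices of its copies of $K_k$. $\mathrm{int}_k(G)$ is the set of vertices lying in more than one component; $\mathrm{ext}(C)$ is the set of vertices of $C$ lying in no other component. A $K_{k+1}$-factor is a set of vertex-disjoint copies of $K_{k+1}$; it is connected if all copies of $K_k$ contained in its members lie in one component; its size is the number of covered vertices; $CK_{k+1}F(G)$ is the maximum size of a connected $K_{k+1}$-factor in $G$. *)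

(* Defs.v *)
(* Graph = symmetric irreflexive relation e on a finType T. *)
From mathcomp Require Import all_boot all_order all_algebra.
Set Implicit Arguments. Unset Strict Implicit. Unset Printing Implicit Defensive.
Import Order.TTheory GRing.Theory Num.Theory.

Section Cliques.
Variables (T : finType) (e : rel T).

Definition is_clique (A : {set T}) : bool :=
  [forall x in A, forall y in A, (x != y) ==> e x y].

Definition kcopies (k : nat) : {set {set T}} :=
  [set A : {set T} | (#|A| == k) && is_clique A].

Definition kstep (k : nat) : rel {set T} := fun A B =>
  [&& A \in kcopies k, B \in kcopies k &
      [exists C in kcopies k.+1, (A \subset C) && (B \subset C)]].

Definition kconn (k : nat) (A B : {set T}) : bool := connect (kstep k) A B.

Definition kcomp (k : nat) (A : {set T}) : {set {set T}} :=
  [set B in kcopies k | kconn k A B].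

Definition kcomps (k : nat) : {set {set {set T}}} :=
  [set kcomp k A | A in kcopies k].

Definition compV (C : {set {set T}}) : {set T} := cover C.

Definition int_k (k : nat) : {set T} :=
  [set v | [exists C1 in kcomps k, exists C2 in kcomps k,
             [&& C1 != C2, v \in compV C1 & v \in compV C2]]].

Definition ext (k : nat) (C : {set {set T}}) : {set T} :=
  [set v in compV C | [forall C' in kcomps k, (C' != C) ==> (v \notin compV C')]].

Definition conn_factor (k : nat) (F : {set {set T}}) : bool :=
  [&& F \subset kcopies k.+1, trivIset F &
      [forall A in kcopies k, forall B in kcopies k,
         ([exists X in F, A \subset X] && [exists Y in F, B \subset Y])
           ==> kconn k A B]].

Definition CKF (k : nat) : nat :=
  \max_(F : {set {set T}} | conn_factor k F) #|cover F|.

End Cliques.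

(* Main.v *)
Require Import Defs.
From mathcomp Require Import all_boot all_order all_algebra.
From mathcomp Require Import zify.

Module Helpers.
Set Implicit Arguments. Unset Strict Implicit. Unset Printing Implicit Defensive.

Section G.
Variables (T : finType) (e : rel T).
Hypothesis e_sym : symmetric e.
Hypothesis e_irr : irreflexive e.

Lemma is_cliqueP (A : {set T}) :
  reflect (forall x y, x \in A -> y \in A -> x != y -> e x y) (is_clique e A).
Proof.
apply: (iffP forallP) => [H x y xA yA xy | H x].
  by move: (H x); rewrite xA /= => /forallP /(_ y); rewrite yA /= xy.
apply/implyP => xA; apply/forallP => y; apply/implyP => yA; apply/implyP.
exact: H.
Qed.

Definition nn (S : {set T}) v := [set z in S | ~~ e v z].
Definition CN (S A : {set T}) := [set z in S | [forall a in A, e a z]].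

Lemma grow (S : {set T}) c r : (forall v, v \in S -> #|nn S v| <= c) -> (r.-1 * c < #|S|)%N ->
  forall j A, is_clique e A -> A \subset S -> #|S| <= #|CN S A| + #|A| * c -> #|A| + j <= r ->
   exists A' : {set T}, [/\ A \subset A', A' \subset S, is_clique e A' & #|A'| = #|A| + j].
Proof.
move=> hc hr; elim=> [|j IH] A cA sAS hCN hAj.
  by exists A; rewrite addn0; split.
have hA : #|A| <= r.-1 by lia.
have : 0 < #|CN S A|.
  have := leq_mul hA (leqnn c); lia.
case/card_gt0P => z; rewrite inE => /andP [zS /forallP zA].
have zNA : z \notin A.
  apply/negP => zA'; have := zA z; rewrite zA' /= e_irr //.
have cA' : is_clique e (z |: A).
  apply/is_cliqueP => x y; rewrite !inE => /predU1P [->|xA] /predU1P [->|yA]; rewrite ?eqxx //.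
  - move=> _; have := zA y; rewrite yA /= e_sym //.
  - move=> _; by have := zA x; rewrite xA.
  - by move/is_cliqueP: cA; apply.
have sub : CN S A :\: nn S z \subset CN S (z |: A).
  apply/subsetP => w; rewrite !inE => /andP [hw /andP [wS /forallP wA]].
  rewrite wS /=; move: hw; rewrite wS /= negbK => ezw.
  apply/forallP => a; apply/implyP; case/setU1P => [->|aA] //.
  by have := wA a; rewrite aA.
have h1 := subset_leq_card sub.
have h2 : #|CN S A| - #|nn S z| <= #|CN S A :\: nn S z|.
  by rewrite cardsD leq_sub2l // subset_leq_card // subsetIr.
have h3 := hc z zS.
have e1 : z |: A \subset S by rewrite subUset sub1set zS sAS.
have e2 : #|S| <= #|CN S (z |: A)| + #|z |: A| * c.
  rewrite cardsU1 zNA add1n mulSn. lia.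
have e3 : #|z |: A| + j <= r by rewrite cardsU1 zNA add1n ?mulSn; lia.
have [A' [s1 s2 s3 s4]] := IH (z |: A) cA' e1 e2 e3.
exists A'; split => //; first by apply: subset_trans s1; apply: subsetUr.
by rewrite s4 cardsU1 zNA add1n; lia.
Qed.

Variable k : nat.
Hypothesis hk : 3 <= k.
Variable I : {set T}.
Hypothesis hI : forall A : {set T}, A \subset I -> #|A| = k -> ~~ is_clique e A.

Definition packing (P : {set {set T}}) (S : {set T}) :=
  (forall B, B \in P -> [/\ B \subset S, #|B| = k.-1 & is_clique e B]) /\
  (forall B1 B2, B1 \in P -> B2 \in P -> B1 != B2 -> [disjoint B1 & B2]).

Lemma CN0 S : CN S set0 = S.
Proof. by apply/setP => z; rewrite !inE; case: (z \in S) => //=; apply/forallP => a; rewrite inE. Qed.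

Lemma is_clique0 : is_clique e set0.
Proof. by apply/is_cliqueP => x y; rewrite inE. Qed.

Lemma pack (c : nat) : forall S : {set T}, S \subset I -> (forall v, v \in S -> #|nn S v| <= c) ->
  exists P, packing P S /\ #|S| <= #|P| + k.-2 * c.
Proof.
elim: c => [|c IH] S sSI hc.
  exists set0; split; first by split => B; rewrite inE.
  case: (set_0Vmem S) => [->|[v vS]]; first by rewrite cards0.
  have := hc v vS; have : v \in nn S v by rewrite inE vS e_irr.
  by move=> vn; rewrite leqn0 => /eqP /cards0_eq h; rewrite h inE in vn.
case: (leqP #|S| (k.-2 * c.+1)) => hS.
  by exists set0; split; [split => B; rewrite inE | rewrite cards0].
have hS' : (k.-1).-1 * c.+1 < #|S| by [].
have e1 : #|S| <= #|CN S set0| + #|(set0 : {set T})| * c.+1 by rewrite CN0 cards0 mul0n addn0.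
have e2 : #|(set0 : {set T})| + k.-1 <= k.-1 by rewrite cards0.
have [B [_ sBS cB cardB]] := grow hc hS' is_clique0 (sub0set S) e1 e2.
rewrite cards0 add0n in cardB.
set S' := S :\: B.
have hc' : forall v, v \in S' -> #|nn S' v| <= c.
  move=> v; rewrite inE => /andP [vB vS].
  have [b bB nvb] : exists2 b, b \in B & ~~ e v b.
    apply/exists_inP; apply: contraT; rewrite negb_exists_in => /forall_inP hb.
    have : is_clique e (v |: B).
      apply/is_cliqueP => x y /setU1P [->|xB] /setU1P [->|yB]; rewrite ?eqxx //.
      - by move=> _; have := hb y yB; rewrite negbK.
      - by move=> _; have := hb x xB; rewrite negbK e_sym.
      - by move/is_cliqueP: cB; apply.
    move=> hcl.
    have hsub : v |: B \subset I.
      by rewrite subUset sub1set (subsetP sSI) // (subset_trans sBS sSI).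
    have hcard : #|v |: B| = k by rewrite cardsU1 vB cardB; lia.
    by have := hI hsub hcard; rewrite hcl.
  have : nn S' v \proper nn S v.
    apply/properP; split.
      by apply/subsetP => z; rewrite !inE => /andP [/andP [_ ->] ->].
    by exists b; rewrite !inE ?bB ?(subsetP sBS) //= nvb.
  move/proper_card => h; have := hc v vS; lia.
have [P' [[hP1 hP2] hP']] := IH S' (subset_trans (subsetDl S B) sSI) hc'.
have BnP' : B \notin P'.
  apply/negP => /hP1 [sB _ _].
  have : 0 < #|B| by rewrite cardB; lia.
  case/card_gt0P => z zB; have := subsetP sB z zB; by rewrite inE zB.
exists (B |: P'); split.
  split.
    move=> B0 /setU1P [->|/hP1 [h1 h2 h3]]; first by split.
    by split => //; apply: subset_trans h1 (subsetDl _ _).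
  move=> B1 B2 /setU1P [->|h1] /setU1P [->|h2]; rewrite ?eqxx //.
  - move=> _; have [s2 _ _] := hP1 _ h2.
    rewrite disjoint_sym disjoints_subset; apply: subset_trans s2 _.
    by apply/subsetP => z; rewrite !inE => /andP [].
  - move=> _; have [s1 _ _] := hP1 _ h1.
    rewrite disjoints_subset; apply: subset_trans s1 _.
    by apply/subsetP => z; rewrite !inE => /andP [].
  - exact: hP2.
rewrite cardsU1 BnP'.
have : #|S'| = #|S| - (k.-1) by rewrite cardsD (setIidPr sBS) cardB.
move=> hS'card; rewrite hS'card in hP'.
rewrite mulnS; lia.
Qed.

Definition Xs (c : seq ({set T} * (T * T))) :=
  map (fun p => p.2.1) c ++ map (fun p => p.2.2) c.

Lemma perm_Xs c : perm_eq (Xs c) (flatten [seq [:: p.2.1; p.2.2] | p <- c]).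
Proof.
elim: c => [|p c IH] //=.
rewrite /Xs /= perm_cons.
have h := perm_catCA [:: p.2.2] [seq p0.2.1 | p0 <- c] [seq p0.2.2 | p0 <- c].
rewrite /= in h; rewrite -h /= perm_cons; exact: IH.
Qed.

Lemma memXs_cons p c z : (z \in Xs (p :: c)) = [|| z == p.2.1, z == p.2.2 | z \in Xs c].
Proof.
rewrite (perm_mem (perm_Xs _)) (perm_mem (perm_Xs c)) /=.
by rewrite !inE.
Qed.

Lemma uniqXs_cons p c : uniq (Xs (p :: c)) =
  [&& p.2.1 != p.2.2, p.2.1 \notin Xs c, p.2.2 \notin Xs c & uniq (Xs c)].
Proof.
have hm := perm_mem (perm_Xs c).
rewrite (perm_uniq (perm_Xs _)) !hm (perm_uniq (perm_Xs c)) /=.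
by rewrite inE negb_or; case: (p.2.1 != p.2.2); rewrite ?andbA.
Qed.

Lemma size_Xs c : size (Xs c) = 2 * size c.
Proof. by rewrite /Xs size_cat !size_map; lia. Qed.

Variable X : {set T}.
Hypothesis hXI : [disjoint X & I].
Variable Pb : {set {set T}}.
Hypothesis hPb : packing Pb I.

Definition good (p : {set T} * (T * T)) :=
  [&& p.1 \in Pb, p.2.1 \in X, p.2.2 \in X, e p.2.1 p.2.2 &
      [forall z in p.1, e p.2.1 z && e p.2.2 z]].

Definition valid c := [&& all good c, uniq (map fst c) & uniq (Xs c)].

Lemma bad_card a :
  #|[set B in Pb | ~~ [forall z in B, e a z]]| <= #|nn I a|.
Proof.
set bad := [set B in Pb | _].
pose f (B : {set T}) := odflt a [pick z in B | ~~ e a z].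
have fP : forall B, B \in bad -> f B \in B /\ ~~ e a (f B).
  move=> B; rewrite inE => /andP [_]; rewrite negb_forall_in => /exists_inP [z zB nz].
  rewrite /f; case: pickP => [z' /andP [h1 h2] | /(_ z)]; first by [].
  by rewrite zB nz.
have inj : {in bad &, injective f}.
  move=> B1 B2 h1 h2 hf; apply/eqP; apply: contraT => nB.
  have [p1 _] := fP _ h1; have [p2 _] := fP _ h2.
  move: h1 h2; rewrite !inE => /andP [b1 _] /andP [b2 _].
  have hd := hPb.2 _ _ b1 b2 nB; have := disjointFl hd p2; by rewrite -hf p1.
rewrite -(card_in_imset inj); apply: subset_leq_card; apply/subsetP => z /imsetP [B hB ->].
have [p1 p2] := fP _ hB; move: hB; rewrite inE => /andP [bP _].
have [sBI _ _] := hPb.1 _ bP.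
by rewrite inE (subsetP sBI) //.
Qed.

Lemma pickB (s : seq {set T}) a b :
  size s + #|nn I a| + #|nn I b| < #|Pb| ->
  exists2 B, B \in Pb & (B \notin s) && [forall z in B, e a z && e b z].
Proof.
move=> hs.
set U := [set B in s] :|: [set B in Pb | ~~ [forall z in B, e a z]]
          :|: [set B in Pb | ~~ [forall z in B, e b z]].
have hU : #|U| <= size s + #|nn I a| + #|nn I b|.
  have h1 := (leq_card_setU ([set B in s] :|: [set B in Pb | ~~ [forall z in B, e a z]])
                           [set B in Pb | ~~ [forall z in B, e b z]]).1.
  have h2 := (leq_card_setU [set B in s] [set B in Pb | ~~ [forall z in B, e a z]]).1.
  have h3 : #|[set B in s]| <= size s by rewrite cardsE card_size.
  have := bad_card a; have := bad_card b => hb ha.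
  apply: leq_trans h1 _; apply: leq_add => //; apply: leq_trans h2 _; exact: leq_add.
have : 0 < #|Pb :\: U|.
  rewrite cardsD subn_gt0; apply: leq_ltn_trans (subset_leq_card (subsetIr Pb U)) _; exact: leq_ltn_trans hU hs.
case/card_gt0P => B; rewrite !inE => /andP [].
move=> hn BP; move: hn; rewrite BP /= !negb_or !negbK => /andP [/andP [Bs ha] hb].
exists B => //; rewrite Bs /=.
apply/forall_inP => z zB; apply/andP; split.
  by move/forall_inP: ha; apply.
by move/forall_inP: hb; apply.
Qed.

Lemma pig (A : {set T}) c : {subset A <= Xs c} ->
  #|A| <= \sum_(p <- c) ((p.2.1 \in A) + (p.2.2 \in A)).
Proof.
elim: c A => [|p c IH] A sA.
  rewrite big_nil leqn0 cards_eq0; apply/eqP/setP => z; rewrite inE.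
  by apply/negP => /sA.
rewrite big_cons.
have h1 := cardsID [set p.2.1; p.2.2] A.
have h2 : #|A :&: [set p.2.1; p.2.2]| <= (p.2.1 \in A) + (p.2.2 \in A).
  have -> : #|A :&: [set p.2.1; p.2.2]| = #|[seq z <- [:: p.2.1; p.2.2] | z \in A]|.
    by apply: eq_card => z; rewrite !inE mem_filter !inE andbC.
  apply: leq_trans (card_size _) _; rewrite size_filter /=.
  by case: (p.2.1 \in A); case: (p.2.2 \in A).
have h3 : #|A :\: [set p.2.1; p.2.2]| <= \sum_(p0 <- c) ((p0.2.1 \in A :\: [set p.2.1; p.2.2]) + (p0.2.2 \in A :\: [set p.2.1; p.2.2])).
  apply: IH => z; rewrite !inE negb_or => /andP [/andP [za zb] zA].
  by have := sA z zA; rewrite memXs_cons (negbTE za) (negbTE zb).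
have h4 : \sum_(p0 <- c) ((p0.2.1 \in A :\: [set p.2.1; p.2.2]) + (p0.2.2 \in A :\: [set p.2.1; p.2.2]))
   <= \sum_(p0 <- c) ((p0.2.1 \in A) + (p0.2.2 \in A)).
  apply: leq_sum => q _; apply: leq_add; rewrite inE; case: (_ \in A); rewrite ?andbF ?andbT //; exact: leq_b1.
lia.
Qed.

Lemma sum_le2 (c : seq ({set T} * (T * T))) f : (forall p, p \in c -> f p <= 2) ->
  \sum_(p <- c) f p <= 2 * size c.
Proof.
elim: c => [|p c IH] h; first by rewrite big_nil.
rewrite big_cons /=; have := h p (mem_head _ _).
have := IH (fun q hq => h q (@mem_behead _ (p :: c) q hq)); lia.
Qed.

Lemma valid_perm c c' : perm_eq c c' -> valid c = valid c'.
Proof.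
move=> hp; rewrite /valid (perm_all _ hp) (perm_uniq (perm_map fst hp)).
suff -> : uniq (Xs c) = uniq (Xs c') by [].
apply: perm_uniq; rewrite /Xs; apply: perm_cat; exact: perm_map.
Qed.

Lemma valid_cons p c : valid (p :: c) =
  [&& good p, p.1 \notin map fst c, p.2.1 != p.2.2, p.2.1 \notin Xs c, p.2.2 \notin Xs c & valid c].
Proof.
rewrite /valid uniqXs_cons /=.
by case: (good p); case: (p.1 \notin _); case: (p.2.1 != _); case: (p.2.1 \notin _);
   case: (p.2.2 \notin _); case: (all good c); case: (uniq (map fst c)); case: (uniq (Xs c)).
Qed.

Variable m : nat.
Hypothesis hB1 : forall a b, a \in X -> b \in X -> m + #|nn I a| + #|nn I b| < #|Pb|.
Hypothesis hB2 : forall u, u \in X -> m <= #|[set z in X | e u z]|.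
Hypothesis hB3 : 2 * m <= #|X|.

Lemma step c : valid c -> size c < m -> exists c', valid c' /\ size c' = (size c).+1.
Proof.
move=> vc hcm.
set F := [set z in X | z \notin Xs c].
have hF : 1 < #|F|.
  have h1 : #|[set z in X | z \in Xs c]| <= 2 * size c.
    rewrite -size_Xs; apply: leq_trans (card_size _).
    by apply: subset_leq_card; apply/subsetP => z; rewrite !inE => /andP [].
  have h2 := cardsID [set z | z \in Xs c] X.
  have -> : F = X :\: [set z | z \in Xs c] by apply/setP => z; rewrite !inE andbC.
  have h3 : X :&: [set z | z \in Xs c] = [set z in X | z \in Xs c] by apply/setP => z; rewrite !inE.
  rewrite h3 in h2; lia.
case: (boolP [exists a in F, exists b in F, e a b]).
  case/exists_inP => a aF /exists_inP [b bF eab].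
  move: aF bF; rewrite !inE => /andP [aX aXs] /andP [bX bXs].
  have hs : size (map fst c) + #|nn I a| + #|nn I b| < #|Pb|.
    have := hB1 aX bX; rewrite size_map; lia.
  have [B BP /andP [Bn hB]] := pickB hs.
  exists ((B, (a, b)) :: c); split => //.
  rewrite valid_cons /= Bn aXs bXs vc /good /= BP aX bX eab hB !andbT /=.
  by apply/negP => /eqP hab; rewrite hab e_irr in eab.
rewrite negb_exists_in => /forall_inP noedge.
have {}noedge : forall a b, a \in F -> b \in F -> ~~ e a b.
  move=> a b aF bF; have := noedge a aF; rewrite negb_exists_in => /forall_inP; exact.
case/card_gt1P: hF => u [v [uF vF uv]].
set NX := fun w => [set z in X | e w z].
have subN : forall w, w \in F -> {subset NX w <= Xs c}.
  move=> w wF z; rewrite inE => /andP [zX ewz]; apply: contraT => zn.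
  have zF : z \in F by rewrite inE zX.
  by have := noedge _ _ wF zF; rewrite ewz.
have pu := pig (subN u uF); have pv := pig (subN v vF).
move: (uF) (vF); rewrite !inE => /andP [uX uXs] /andP [vX vXs].
have hu := hB2 uX; have hv := hB2 vX.
pose w (p : {set T} * (T * T)) := (p.2.1 \in NX u) + (p.2.2 \in NX u) + ((p.2.1 \in NX v) + (p.2.2 \in NX v)).
have hsum : 2 * size c < \sum_(p <- c) w p.
  rewrite /w big_split /=.
rewrite /NX in pu pv *; lia.
have [p pc hp] : exists2 p, p \in c & 2 < w p.
  apply/hasP; apply: contraT; rewrite -all_predC => /allP hall.
  have := sum_le2 (f := w) (c := c); rewrite leqNgt hsum /= => h; apply: h.
  by move=> p /hall /=; rewrite -leqNgt.
have memXs : forall q c1, q \in c1 -> (q.2.1 \in Xs c1) && (q.2.2 \in Xs c1).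
  move=> q c1 qc; rewrite /Xs !mem_cat.
  by rewrite (map_f (fun p => p.2.1) qc) (map_f (fun p => p.2.2) qc) orbT.
have subXs : forall c1 c2, {subset c1 <= c2} -> {subset Xs c1 <= Xs c2}.
  move=> c1 c2 sc z; rewrite /Xs !mem_cat => /orP [] /mapP [q qc ->].
    by rewrite (map_f (fun p => p.2.1) (sc _ qc)).
  by rewrite (map_f (fun p => p.2.2) (sc _ qc)) orbT.
set c0 := rem p c.
have vpc : valid (p :: c0) by rewrite -(valid_perm (perm_to_rem pc)).
have sc0 : size c0 = (size c).-1 by rewrite size_rem.
have [p' [vp' hu' hv' sp']] : exists p', [/\ valid (p' :: c0), p'.2.1 \in NX u,
     p'.2.2 \in NX v & {subset Xs (p' :: c0) <= Xs c}].
  have hsub : {subset Xs (p :: c0) <= Xs c}.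
    by apply: subXs => q; rewrite (perm_mem (perm_to_rem pc)).
  have : ((p.2.1 \in NX u) && (p.2.2 \in NX v)) || ((p.2.2 \in NX u) && (p.2.1 \in NX v)).
    move: hp; rewrite /w.
    by case: (p.2.1 \in NX u); case: (p.2.2 \in NX u); case: (p.2.1 \in NX v);
       case: (p.2.2 \in NX v).
  case/orP => /andP [h1 h2]; first by exists p; split.
  exists (p.1, (p.2.2, p.2.1)); split => //.
    move: vpc; rewrite !valid_cons /good /=.
    case/and5P => /and5P [g1 g2 g3 g4 g5] g6 g7 g8 /andP [g9 g10].
    rewrite g1 g2 g3 e_sym g4 g6 eq_sym g7 g8 g9 g10 /= andbT.
    apply/forall_inP => z zB; move/forall_inP: g5 => /(_ z zB); by rewrite andbC.
  move=> z; rewrite memXs_cons /= => hz; apply: hsub; rewrite memXs_cons.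
  by move: hz; case: (z == p.2.2); case: (z == p.2.1).
move: vp'; rewrite valid_cons => /and5P [gp' n1 ab' an' /andP [bn' vc0]].
move: gp'; rewrite /good => /and5P [_ aX bX _ _].
have a'c := sp' p'.2.1; have b'c := sp' p'.2.2.
rewrite !memXs_cons !eqxx /= ?orbT in a'c b'c.
have {}a'c := a'c is_true_true; have {}b'c := b'c is_true_true.
have c0c : {subset Xs c0 <= Xs c}.
  by move=> z hz; apply: sp'; rewrite memXs_cons hz !orbT.
move: hu' hv'; rewrite !inE => /andP [_ eua] /andP [_ evb].
have c_pos : 0 < size c by case: (c) pc.
have hc0m : (size c0).+1 <= m by rewrite sc0; move: hcm c_pos; clear; lia.
have hs1 : size (map fst c0) + #|nn I u| + #|nn I p'.2.1| < #|Pb|.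
  rewrite size_map; apply: leq_ltn_trans (hB1 uX aX); rewrite !leq_add2r; exact: ltnW.
have [B1 B1P /andP [B1n hB1']] := pickB hs1.
have hs2 : size (B1 :: map fst c0) + #|nn I v| + #|nn I p'.2.2| < #|Pb|.
  rewrite /= size_map; apply: leq_ltn_trans (hB1 vX bX); by rewrite !leq_add2r.
have [B2 B2P /andP [B2n hB2']] := pickB hs2.
exists ((B1, (u, p'.2.1)) :: (B2, (v, p'.2.2)) :: c0); split; last by rewrite /= sc0; move: c_pos; clear; lia.
have ua : u != p'.2.1 by apply/negP => /eqP h; rewrite h e_irr in eua.
have vb : v != p'.2.2 by apply/negP => /eqP h; rewrite h e_irr in evb.
have ub : u != p'.2.2 by apply/negP => /eqP h; rewrite -h (negbTE uXs) in b'c.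
have av : p'.2.1 != v by apply/negP => /eqP h; rewrite h (negbTE vXs) in a'c.
have uc0 : u \notin Xs c0 by apply/negP => /c0c; rewrite (negbTE uXs).
have vnc0 : v \notin Xs c0 by apply/negP => /c0c; rewrite (negbTE vXs).
move: B2n; rewrite inE negb_or => /andP [B21 B2n].
rewrite !valid_cons /good /= !memXs_cons /= B1P B2P uX vX aX bX eua evb hB1' hB2' /=.
rewrite inE negb_or eq_sym B21 B1n B2n ua !negb_or (negbTE uv) (negbTE ub) uc0 (negbTE av) (negbTE ab') an' vb vnc0 bn' vc0.
done.
Qed.

Lemma iter_step t : t <= m -> exists c, valid c /\ size c = t.
Proof.
elim: t => [|t IH] ht; first by exists [::].
have [c [vc sc]] := IH (ltnW ht).
have hlt : size c < m by rewrite sc.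
have [c' [vc' sc']] := step vc hlt.
by exists c'; rewrite sc' sc.
Qed.

Definition Qp (p : {set T} * (T * T)) := p.1 :|: [set p.2.1; p.2.2].

Lemma uniq_map_inj (f : {set T} * (T * T) -> {set T}) c p1 p2 :
  uniq (map f c) -> p1 \in c -> p2 \in c -> f p1 = f p2 -> p1 = p2.
Proof.
elim: c => [|q c IH] //= /andP [fq uc].
rewrite !inE => /predU1P [->|h1] /predU1P [->|h2] // hf.
- by move: fq; rewrite hf (map_f f h2).
- by move: fq; rewrite -hf (map_f f h1).
- exact: IH.
Qed.

Lemma Xs_disj c p1 p2 z : uniq (Xs c) -> p1 \in c -> p2 \in c -> p1 != p2 ->
  z \in [set p1.2.1; p1.2.2] -> z \in [set p2.2.1; p2.2.2] -> False.
Proof.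
have memXs : forall q c1, q \in c1 -> (q.2.1 \in Xs c1) && (q.2.2 \in Xs c1).
  move=> q c1 qc; rewrite /Xs !mem_cat.
  by rewrite (map_f (fun p => p.2.1) qc) (map_f (fun p => p.2.2) qc) orbT.
elim: c => [|q c IH] //; rewrite uniqXs_cons => /and4P [_ n1 n2 uc].
have inXs : forall q', q' \in c -> z \in [set q'.2.1; q'.2.2] -> z \in Xs c.
  move=> q' hq'; have := memXs _ _ hq'; rewrite !inE => /andP [m1 m2].
  by case/orP => /eqP ->.
have notXs : z \in [set q.2.1; q.2.2] -> z \in Xs c -> False.
  rewrite !inE => /orP [] /eqP ->; by [rewrite (negbTE n1) | rewrite (negbTE n2)].
rewrite !in_cons => /predU1P [->|h1] /predU1P [->|h2]; rewrite ?eqxx //.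
- by move=> _ hz1 hz2; apply: (notXs hz1); apply: inXs h2 hz2.
- by move=> _ hz1 hz2; apply: (notXs hz2); apply: inXs h1 hz1.
- exact: IH.
Qed.

Lemma Qp_disj c p1 p2 : valid c -> p1 \in c -> p2 \in c -> p1 != p2 ->
  [disjoint Qp p1 & Qp p2].
Proof.
case/and3P => /allP ag um ux h1 h2 n12.
have g1 := ag _ h1; have g2 := ag _ h2.
move: g1 g2; rewrite /good => /and5P [b1 a1 c1 _ _] /and5P [b2 a2 c2 _ _].
have [sB1 _ _] := hPb.1 _ b1; have [sB2 _ _] := hPb.1 _ b2.
have nB : p1.1 != p2.1.
  by apply/negP => /eqP hf; move/negP: n12; apply; apply/eqP; apply: uniq_map_inj um h1 h2 hf.
have dB := hPb.2 _ _ b1 b2 nB.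
have XnI : forall z, z \in X -> z \in I -> False.
  by move=> z zX zI; have := disjointFr hXI zX; rewrite zI.
rewrite disjoints_subset; apply/subsetP => z; rewrite /Qp !inE => hz1; apply/negP => hz2.
case/orP: hz1 => hz1; case/orP: hz2 => hz2.
- by have := disjointFr dB hz1; rewrite hz2.
- apply: (XnI z) (subsetP sB1 _ hz1).
  by case/orP: hz2 => /eqP ->.
- apply: (XnI z) (subsetP sB2 _ hz2).
  by case/orP: hz1 => /eqP ->.
- by have := Xs_disj (z:=z) ux h1 h2 n12; rewrite !inE; apply.
Qed.

Lemma Qp_card p : good p -> #|Qp p| = k.+1.
Proof.
rewrite /good => /and5P [bP aX bX eab _].
have [sB cB _] := hPb.1 _ bP.
rewrite /Qp cardsU cards2 cB.
have -> : p.1 :&: [set p.2.1; p.2.2] = set0.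
  apply/setP => z; rewrite !inE; apply/negP => /andP [zB /orP [] /eqP hz].
  + by have := disjointFr hXI aX; rewrite -hz (subsetP sB _ zB).
  + by have := disjointFr hXI bX; rewrite -hz (subsetP sB _ zB).
have -> : p.2.1 != p.2.2 by apply/negP => /eqP h; rewrite h e_irr in eab.
rewrite cards0; lia.
Qed.

Lemma Qp_clique p : good p -> is_clique e (Qp p).
Proof.
rewrite /good => /and5P [bP aX bX eab /forall_inP hB].
have [_ _ cB] := hPb.1 _ bP.
apply/is_cliqueP => x y; rewrite /Qp !inE.
have hz : forall z, z \in p.1 -> e p.2.1 z /\ e p.2.2 z by move=> z /hB /andP.
case/orP => [xB|/orP [] /eqP ->]; case/orP => [yB|/orP [] /eqP ->].
- by move/is_cliqueP: cB; apply.
- by move=> _; rewrite e_sym; case: (hz _ xB).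
- by move=> _; rewrite e_sym; case: (hz _ xB).
- by move=> _; case: (hz _ yB).
- by rewrite eqxx.
- by [].
- by move=> _; case: (hz _ yB).
- by rewrite e_sym.
- by rewrite eqxx.
Qed.

Lemma Qp_meetX p (A : {set T}) : good p -> A \subset Qp p -> #|A| = k -> exists2 x, x \in A & x \in X.
Proof.
move=> gp sA cA; move: (gp); rewrite /good => /and5P [bP aX bX _ _].
have [sB cB _] := hPb.1 _ bP.
case aA: (p.2.1 \in A); first by exists p.2.1.
case bA: (p.2.2 \in A); first by exists p.2.2.
have : A \subset p.1.
  apply/subsetP => z zA; have := subsetP sA z zA; rewrite /Qp !inE.
  by case/orP => // /orP [] /eqP hz; rewrite -hz zA in aA bA.
move/subset_leq_card; rewrite cA cB; lia.
Qed.

Lemma fam c : valid c ->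
  [/\ [set Qp p | p in c] \subset kcopies e k.+1, trivIset [set Qp p | p in c],
      #|cover [set Qp p | p in c]| = k.+1 * size c &
      forall Q (A : {set T}), Q \in [set Qp p | p in c] -> A \subset Q -> #|A| = k ->
        exists2 x, x \in A & x \in X].
Proof.
move=> vc; move: (vc) => /and3P [/allP ag um ux].
have inj : {in c &, injective Qp}.
  move=> p1 p2 h1 h2 hq; apply/eqP; apply: contraT => n12.
  have := Qp_disj vc h1 h2 n12; rewrite hq disjoints_subset => hs.
  have : 0 < #|Qp p2| by rewrite Qp_card ?ag.
  case/card_gt0P => z hz; have := subsetP hs z hz; by rewrite inE hz.
have tF : trivIset [set Qp p | p in c].
  apply/trivIsetP => Q1 Q2 /imsetP [p1 h1 ->] /imsetP [p2 h2 ->] neq.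
  apply: (Qp_disj vc h1 h2); apply/negP => /eqP h; move/negP: neq; apply; by rewrite h.
split => //.
- apply/subsetP => Q /imsetP [p hp ->]; rewrite inE Qp_card ?ag // eqxx /=.
  exact: Qp_clique (ag _ hp).
- move/eqP: tF => <-.
  rewrite (eq_bigr (fun _ => k.+1)); last first.
    by move=> Q /imsetP [p hp ->]; rewrite Qp_card ?ag.
  rewrite sum_nat_const (card_in_imset inj).
  have uc : uniq c := map_uniq um.
  by rewrite (card_uniqP uc) mulnC.
- move=> Q A /imsetP [p hp ->]; exact: Qp_meetX (ag _ hp).
Qed.
End G.


Section Comp.
Variables (T : finType) (e : rel T) (k : nat).

Lemma kcompP A : A \in kcopies e k -> kcomp e k A \in kcomps e k.
Proof. by move=> hA; apply: imset_f. Qed.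

Lemma kcomp_self A : A \in kcopies e k -> A \in kcomp e k A.
Proof. by move=> hA; rewrite inE hA /kconn connect0. Qed.

Lemma in_compV (C : {set {set T}}) A z : A \in C -> z \in A -> z \in compV C.
Proof. by move=> hA hz; apply/bigcupP; exists A. Qed.

Lemma sub_compV A z : A \in kcopies e k -> z \in A -> z \in compV (kcomp e k A).
Proof. by move=> hA; apply: in_compV; apply: kcomp_self. Qed.

Lemma ext_comp C1 A x : x \in ext e k C1 -> A \in kcopies e k -> x \in A -> kcomp e k A = C1.
Proof.
rewrite inE => /andP [_ /forall_inP hx] hA xA.
apply/eqP; apply: contraT => ne.
by have := hx _ (kcompP hA); rewrite ne /= (sub_compV hA xA).
Qed.

Lemma same_comp A B : B \in kcopies e k -> kcomp e k A = kcomp e k B -> kconn e k A B.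
Proof. by move=> hB h; have := kcomp_self hB; rewrite -h inE => /andP []. Qed.

Lemma in_int v C1 C2 : C1 \in kcomps e k -> C2 \in kcomps e k -> C1 != C2 ->
  v \in compV C1 -> v \in compV C2 -> v \in int_k e k.
Proof.
move=> h1 h2 n12 v1 v2; rewrite inE; apply/exists_inP; exists C1 => //.
by apply/exists_inP; exists C2 => //; rewrite n12 v1 v2.
Qed.

Lemma ext_notint C1 v : C1 \in kcomps e k -> v \in ext e k C1 -> v \notin int_k e k.
Proof.
move=> hC1; rewrite inE => /andP [vC /forall_inP hx]; apply/negP; rewrite inE.
case/exists_inP => D1 hD1 /exists_inP [D2 hD2 /and3P [n12 v1 v2]].
case: (eqVneq D1 C1) => [e1|n1].
  by have := hx _ hD2; rewrite v2 -e1 eq_sym n12.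
by have := hx _ hD1; rewrite n1 v1.
Qed.

Lemma ext_disj C C' v : C \in kcomps e k -> C' \in kcomps e k -> C != C' ->
  v \in ext e k C -> v \in ext e k C' -> False.
Proof.
move=> h h' n; rewrite !inE => /andP [vC /forall_inP hx] /andP [vC' _].
by have := hx _ h'; rewrite eq_sym n vC'.
Qed.
End Comp.

Lemma cardsU_disj (T : finType) (A B : {set T}) : [disjoint A & B] -> #|A :|: B| = #|A| + #|B|.
Proof. by move=> h; apply/eqP; rewrite (leq_card_setU A B).2. Qed.

Lemma sum_disj (T I : finType) (J : {set I}) (f : I -> {set T}) :
  (forall i j, i \in J -> j \in J -> i != j -> [disjoint f i & f j]) ->
  \sum_(i in J) #|f i| = #|\bigcup_(i in J) f i|.
Proof.
move: {2}#|J| (erefl #|J|) => n; elim: n J => [|n IH] J hJ hd.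
  move/eqP: hJ; rewrite cards_eq0 => /eqP ->.
  by rewrite !big_set0 cards0.
have : 0 < #|J| by rewrite hJ.
case/card_gt0P => i iJ.
rewrite (big_setD1 i iJ) (big_setD1 i iJ) /= cardsU_disj; last first.
  rewrite -setI_eq0; apply/eqP/setP => z; rewrite !inE; apply/negP => /andP [zi /bigcupP [j hj zj]].
  move: hj; rewrite !inE => /andP [ji jJ].
  have ij : i != j by rewrite eq_sym.
  by have := disjointFr (hd _ _ iJ jJ ij) zi; rewrite zj.
rewrite IH //; first by rewrite (cardsD1 i J) iJ in hJ; case: hJ.
by move=> a b; rewrite !inE => /andP [_ aJ] /andP [_ bJ]; apply: hd.
Qed.

End Helpers.
Import Helpers.

Import Order.TTheory GRing.Theory Num.Theory.
Local Open Scope ring_scope.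
Theorem lemma6p6 (T : finType) (e : rel T) (k delta : nat)
  (e_sym : symmetric e) (e_irr : irreflexive e)
  (hk : (3 <= k)%N)
  (hmindeg : forall v : T, (delta <= #|[set w | e v w]|)%N)
  (hdelta : ((k - 1) * #|T| < k * delta)%N)
  (htwo : (1 < #|kcomps e k|)%N)
  (hint : forall A : {set T}, A \in kcopies e k -> ~~ (A \subset int_k e k))
  (C1 : {set {set T}}) (hC1 : C1 \in kcomps e k) :
  let q' : int := (k * delta)%:Z - ((k - 1) * #|T|)%:Z
                  + (\sum_(C in kcomps e k | C != C1) #|ext e k C|)%:Z
                  - (#|ext e k C1|)%:Z in
  (k.+1)%:Z * Num.min ((k * delta)%:Z - ((k - 1) * #|T|)%:Z)
                      (Num.min ((#|ext e k C1| %/ 2)%:Z) q')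
    <= (CKF e k)%:Z.
Proof.
cbv zeta.
set q' := (_ + _ - _ : int).
set n := #|T|.
have [A0 hA0] : exists A, A \in kcopies e k.
  by case/imsetP: hC1 => A hA _; exists A.
have : (0 < #|A0|)%N by move: hA0; rewrite inE => /andP [/eqP -> _]; lia.
case/card_gt0P => v0 _.
have hdn : (delta <= n)%N by apply: leq_trans (hmindeg v0) (max_card _).
set d := (n - delta)%N.
have hdeg : forall v, (#|nn e setT v| <= d)%N.
  move=> v; have h1 := cardsC [set w | e v w].
  have -> : nn e setT v = ~: [set w | e v w] by apply/setP => z; rewrite !inE.
  have := hmindeg v; rewrite /d /n; lia.
have hkd : (k * d < n)%N.
  have e0 : (k * delta <= k * n)%N by rewrite leq_mul2l hdn orbT.
  have e1 : (k * delta = k * n - k * d)%N by rewrite /d mulnBr; lia.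
  have e2 : ((k - 1) * n = k * n - n)%N by rewrite mulnBl mul1n.
  have e3 : (k * d <= k * n)%N by rewrite leq_mul2l leq_subr orbT.
  move: hdelta; rewrite e1 e2 -/n; lia.
set X := ext e k C1; set I := int_k e k.
have eX : X = ext e k C1 by []. have eI : I = int_k e k by [].
clearbody X I.
set Y := ~: (X :|: I).
have eY : Y = ~: (X :|: I) by []. clearbody Y.
have hXI : [disjoint X & I].
  rewrite disjoints_subset; apply/subsetP => z zX; rewrite inE eI.
  by rewrite eX in zX; exact: ext_notint hC1 zX.
have hI' : forall A : {set T}, (A \subset I) -> #|A| = k -> ~~ is_clique e A.
  move=> A sA cA; apply/negP => cl.
  have hA : A \in kcopies e k by rewrite inE cA eqxx cl.
  by have := hint _ hA; rewrite -eI sA.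
have hnnS : forall (S : {set T}) v, (#|nn e S v| <= d)%N.
  move=> S v; apply: leq_trans (hdeg v); apply: subset_leq_card.
  by apply/subsetP => z; rewrite !inE => /andP [_ ->].
have hXY : forall u w, u \in X -> w \in Y -> ~~ e u w.
  move=> u w uX wY; apply/negP => euw.
  have uw : u != w by apply/negP => /eqP h; rewrite h e_irr in euw.
  have hr : ((k.-1) * d < #|[set: T]|)%N.
    rewrite cardsT -/n; apply: leq_ltn_trans hkd; rewrite leq_mul2r leq_pred orbT //.
  have cl : is_clique e [set u; w].
    apply/is_cliqueP => x y; rewrite !inE => /orP [] /eqP -> /orP [] /eqP ->; rewrite ?eqxx //.
    by rewrite e_sym.
  have hcn : (#|[set: T]| <= #|CN e setT [set u; w]| + #|[set u; w]| * d)%N.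
    rewrite cards2 uw.
    have sub : [set: T] \subset CN e setT [set u; w] :|: nn e setT u :|: nn e setT w.
      apply/subsetP => z _; rewrite !inE.
      case: (boolP (e u z)) => hu; case: (boolP (e w z)) => hw; rewrite ?orbT //.
      apply/orP; left; apply/orP; left; apply/forall_inP => a; rewrite !inE.
      by case/orP => /eqP ->.
    have h1 := subset_leq_card sub.
    have h2 := (leq_card_setU (CN e setT [set u; w] :|: nn e setT u) (nn e setT w)).1.
    have h3 := (leq_card_setU (CN e setT [set u; w]) (nn e setT u)).1.
    have := hdeg u; have := hdeg w; lia.
  have hj : (#|[set u; w]| + (k - 2) <= k)%N by rewrite cards2 uw; lia.
  have [A' [s1 _ c1 h1]] := grow e_sym e_irr (fun v _ => hdeg v) hr cl (subsetT _) hcn hj.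
  have hA' : A' \in kcopies e k by rewrite inE c1 h1 cards2 uw andbT; apply/eqP; lia.
  have uA : u \in A' by apply: (subsetP s1); rewrite !inE eqxx.
  have wA : w \in A' by apply: (subsetP s1); rewrite !inE eqxx orbT.
  have uX' : u \in ext e k C1 by rewrite -eX.
  have kc := ext_comp uX' hA' uA.
  have wC1 : w \in compV C1 by rewrite -kc; apply: sub_compV.
  move: wY; rewrite eY in_setC in_setU negb_or => /andP [wX wI].
  move: wX; rewrite eX inE wC1 /= negb_forall_in => /exists_inP [C' hC'].
  rewrite negb_imply negbK => /andP [n1 wC'].
  by move/negP: wI; apply; rewrite eI; apply: (in_int hC1 hC') => //; rewrite eq_sym.
have hnnX : forall a, a \in X -> (#|nn e I a| + #|Y| + #|nn e X a| <= d)%N.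
  move=> a aX.
  have d1 : [disjoint nn e I a & Y].
    rewrite disjoints_subset; apply/subsetP => z; rewrite /nn in_set => /andP [zI _].
    by rewrite eY in_setC in_setC negbK in_setU zI orbT.
  have d2 : [disjoint nn e I a :|: Y & nn e X a].
    rewrite disjoints_subset; apply/subsetP => z; rewrite in_setU => /orP [|zY].
      rewrite /nn in_set => /andP [zI _]; rewrite in_setC in_set negb_and.
      apply/orP; left; apply/negP => zX; by have := disjointFr hXI zX; rewrite zI.
    move: zY; rewrite eY in_setC in_setU negb_or => /andP [zX _].
    by rewrite in_setC /nn in_set (negbTE zX).
  rewrite -(cardsU_disj d1) -(cardsU_disj d2).
  apply: leq_trans (hdeg a); apply: subset_leq_card; apply/subsetP => z.
  rewrite !in_setU => /orP [/orP [|zY]|].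
  - by rewrite /nn !in_set => /andP [_ ->].
  - by rewrite /nn in_set in_setT /=; apply: hXY.
  - by rewrite /nn !in_set => /andP [_ ->].
have haX : forall a, a \in X -> (1 <= #|nn e X a|)%N.
  by move=> a aX; apply/card_gt0P; exists a; rewrite /nn in_set aX e_irr.
have hNX : forall a, a \in X -> (#|[set z in X | e a z]| + #|nn e X a| = #|X|)%N.
  move=> a aX; rewrite -cardsU_disj.
    by apply: eq_card => z; rewrite in_setU /nn !in_set; case: (z \in X); case: (e a z).
  rewrite disjoints_subset; apply/subsetP => z; rewrite in_set => /andP [_ h].
  by rewrite in_setC /nn in_set h andbF.
have hIcard : (#|I| <= (k - 1) * d)%N.
  rewrite leqNgt; apply/negP => hlt.
  have hr : ((k.-1) * d < #|I|)%N by move: hlt; rewrite -subn1.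
  have hcn : (#|I| <= #|CN e I set0| + #|(set0 : {set T})| * d)%N by rewrite CN0 cards0 mul0n addn0.
  have hj : (#|(set0 : {set T})| + k <= k)%N by rewrite cards0.
  have [A' [_ sA c1 h1]] := grow e_sym e_irr (fun v _ => hnnS I v) hr (is_clique0 e) (sub0set I) hcn hj.
  rewrite cards0 add0n in h1.
  by have := hI' _ sA h1; rewrite c1.
have [Pb [hPb hPbc]] := pack e_sym e_irr hk hI' (subxx I) (fun v _ => hnnS I v).
have hpart : (#|X| + #|I| + #|Y| = n)%N.
  by rewrite -(cardsU_disj hXI) eY cardsC.
have hSig : (\sum_(C in kcomps e k | C != C1) #|ext e k C| <= #|Y|)%N.
  rewrite (eq_bigl (fun C => C \in [set C in kcomps e k | C != C1])); last by move=> C; rewrite inE.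
  rewrite sum_disj.
    apply: subset_leq_card; apply/subsetP => z /bigcupP [C]; rewrite inE => /andP [hC nC] zC.
    rewrite eY in_setC in_setU negb_or; apply/andP; split.
      by apply/negP => zX; rewrite eX in zX; apply: (ext_disj hC hC1 nC zC zX).
    rewrite eI; exact: ext_notint hC zC.
  move=> C C'; rewrite !inE => /andP [hC _] /andP [hC' _] nC.
  rewrite disjoints_subset; apply/subsetP => z zC; rewrite inE; apply/negP => zC'.
  exact: (ext_disj hC hC' nC zC zC').
set M := Num.min _ _.
have [hM|hM] := leP M 0.
  apply: (@le_trans _ _ 0); last by [].
  by rewrite pmulr_rle0.
have [m hm] : exists m : nat, M = m%:Z.
  by exists `|M|%N; rewrite abszE ger0_norm // ltW.
have h1 : m%:Z <= (k * delta)%:Z - ((k - 1) * n)%:Z.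
  by move: (lexx M); rewrite {2}/M !le_min hm => /andP [h _]; exact: h.
have h2 : m%:Z <= (#|X| %/ 2)%:Z.
  by move: (lexx M); rewrite {2}/M !le_min hm => /andP [_ /andP [h _]]; exact: h.
have h3 : m%:Z <= q'.
  by move: (lexx M); rewrite {2}/M !le_min hm => /andP [_ /andP [_ h]]; exact: h.
have n1 : (m + (k - 1) * n <= k * delta)%N by lia.
have n2 : (2 * m <= #|X|)%N by move: h2; rewrite lez_nat leq_divRL // mulnC.
have n3 : (m + #|X| + (k - 1) * n <= k * delta + #|Y|)%N.
  move: h3; rewrite /q' -eX -/n; have := hSig; lia.
have eq1 : (k * delta = k * n - k * d)%N.
  have e0 : (k * delta <= k * n)%N by rewrite leq_mul2l hdn orbT.
  by rewrite /d mulnBr; lia.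
have eq2 : ((k - 1) * n = k * n - n)%N by rewrite mulnBl mul1n.
have eq3 : (k.-2 * d = k * d - 2 * d)%N by rewrite -subn2 mulnBl.
have eq4 : ((k - 1) * d = k * d - d)%N by rewrite mulnBl mul1n.
have e5 : (2 * d <= k * d)%N by rewrite leq_mul2r; lia.
have hB1 : forall a b, a \in X -> b \in X -> (m + #|nn e I a| + #|nn e I b| < #|Pb|)%N.
  move=> a b aX bX.
  have := hnnX a aX; have := hnnX b bX; have := haX a aX; have := haX b bX.
  move: n3 hPbc hpart hkd; rewrite eq1 eq2 eq3; lia.
have hB2 : forall u, u \in X -> (m <= #|[set z in X | e u z]|)%N.
  move=> u uX; have := hnnX u uX; have := hNX u uX.
  move: n1 hIcard hpart hkd; rewrite eq1 eq2 eq4; lia.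
have [c [vc sc]] := iter_step e_sym e_irr hk hXI hPb hB1 hB2 n2 (leqnn m).
have [fs ftriv fcard fmeet] := fam e_sym e_irr hk hXI hPb n2 vc.
set F := [set Qp p | p in c] in fs ftriv fcard fmeet.
have compX : forall A : {set T}, A \in kcopies e k ->
    (exists2 Q, Q \in F & A \subset Q) -> kcomp e k A = C1.
  move=> A hA [Q hQ sAQ].
  have cA : #|A| = k by move: hA; rewrite inE => /andP [/eqP -> _].
  have [x xA xX] := fmeet Q A hQ sAQ cA.
  rewrite eX in xX; exact: ext_comp xX hA xA.
have cf : conn_factor e k F.
  rewrite /conn_factor fs ftriv /=.
  apply/forall_inP => A hA; apply/forall_inP => B hB; apply/implyP.
  case/andP => /exists_inP [Q hQ sAQ] /exists_inP [Q' hQ' sBQ].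
  have ha : kcomp e k A = C1 by apply: compX hA _; exists Q.
  have hb : kcomp e k B = C1 by apply: compX (B) (hB) _; exists Q'.
  exact: same_comp hB (etrans ha (esym hb)).
have hCKF : (#|cover F| <= CKF e k)%N by apply: (leq_bigmax_cond F cf).
rewrite hm -PoszM lez_nat.
by rewrite fcard sc in hCKF.
Qed.
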